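(* Let $A\in\mathbb{R}^{n\times n}$ with $A\ge 0$, $B\in\mathbb{R}^{n\times m}$, $C\in\mathbb{R}^{p\times n}$, and let $\mathcal{X}=\{(x,\overline{x},\underline{x}) : x,\overline{x},\underline{x}\in\mathbb{R}^n_+,\ \underline{x}\le x\le \overline{x}\}$. For gains $\overline{K},\underline{K}\in\mathbb{R}^{m\times n}$, $\overline{L},\underline{L}\in\mathbb{R}^{n\times p}$ let \[ M(\overline{K},\underline{K},\overline{L},\underline{L})=\begin{bmatrix} A & B\overline{K} & B\underline{K} \\ \overline{L}C & A-\overline{L}C+B\overline{K} & B\underline{K} \\ \underline{L}C & B\overline{K} & A-\underline{L}C+B\underline{K} \end{bmatrix}. \] If there exist gains $\overline{K},\underline{K},\overline{L},\underline{L}$ with $\underline{L}C\ge0$ such that $M(\overline{K},\underline{K},\overline{L},\underline{L})$ is Schur and $\mathcal{X}$ is invariant under $z(t+1)=M(\overline{K},\underline{K},\overline{L},\underline{L})z(t)$, then there also exist such gains with $\overline{K}=0$, i.e., gains $\underline{K}',\overline{L}',\underline{L}'$ with $\underline{L}'C\ge 0$ such that $M(0,\underline{K}',\overline{L}',\underline{L}')$ is Schur and $\mathcal{X}$ is invariant under $z(t+1)=M(0,\underline{K}',\overline{L}',\underline{L}')z(t)$.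
   Context: All inequalities between matrices or vectors are element-wise; $\mathbb{R}^n_+$ is the closed nonnegative orthant. A square matrix is Schur if its spectral radius is less than $1$. $M$ is the closed-loop matrix of $x(t+1)=Ax(t)+Bu(t)$, $y(t)=Cx(t)$ with upper/lower Luenberger observers $\overline{x}(t+1)=(A-\overline{L}C)\overline{x}(t)+\overline{L}y(t)+Bu(t)$, $\underline{x}(t+1)=(A-\underline{L}C)\underline{x}(t)+\underline{L}y(t)+Bu(t)$ and feedback $u=\underline{K}\,\underline{x}+\overline{K}\,\overline{x}$. Invariance of $\mathcal{X}$ means every trajectory starting in $\mathcal{X}$ stays in $\mathcal{X}$ for all $t\ge0$. *)

(* Defs.v *)
From HB Require Import structures.
From mathcomp Require Import all_boot all_order all_algebra.
From mathcomp Require Import reals.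
From mathcomp.real_closed Require Import complex.
Set Implicit Arguments. Unset Strict Implicit. Unset Printing Implicit Defensive.
Import Order.TTheory GRing.Theory Num.Theory.
Local Open Scope ring_scope.
Local Open Scope complex_scope.

Definition mx_le (R : realType) (m n : nat) (P Q : 'M[R]_(m, n)) : Prop :=
  forall i j, P i j <= Q i j.

(* Schur: spectral radius < 1, i.e. every (complex) eigenvalue, i.e. every
   complex root of the characteristic polynomial, has modulus < 1. *)
Definition is_schur (R : realType) (N : nat) (M : 'M[R]_N) : Prop :=
  forall z : R[i], root (map_poly (fun x : R => x%:C) (char_poly M)) z ->
    `|z| < 1.

(* Closed-loop matrix, state ordered as (x, xbar, xlow) *)
Definition closed_loop (R : realType) (n m p : nat)
  (A : 'M[R]_n) (B : 'M[R]_(n, m)) (C : 'M[R]_(p, n))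
  (Kb Kl : 'M[R]_(m, n)) (Lb Ll : 'M[R]_(n, p)) : 'M[R]_(n + n + n) :=
  block_mx
    (block_mx A (B *m Kb) (Lb *m C) (A - Lb *m C + B *m Kb))
    (col_mx (B *m Kl) (B *m Kl))
    (row_mx (Ll *m C) (B *m Kb))
    (A - Ll *m C + B *m Kl).

Definition inX (R : realType) (n : nat) (z : 'cV[R]_(n + n + n)) : Prop :=
  let x := usubmx (usubmx z) in
  let xb := dsubmx (usubmx z) in
  let xl := dsubmx z in
  [/\ mx_le 0 x, mx_le 0 xb, mx_le 0 xl, mx_le xl x & mx_le x xb].

Definition X_invariant (R : realType) (n : nat) (M : 'M[R]_(n + n + n)) : Prop :=
  forall z0, inX z0 -> forall t : nat, inX (iter t (mulmx M) z0).

(* Main.v *)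
Require Import Defs.
From HB Require Import structures.
From mathcomp Require Import all_boot all_order all_algebra.
From mathcomp Require Import reals.
From mathcomp Require Import ring lra.
Set Implicit Arguments. Unset Strict Implicit. Unset Printing Implicit Defensive.
Import Order.TTheory GRing.Theory Num.Theory.
Local Open Scope ring_scope.

Section S.
Variables (R : realType) (n m p : nat)
  (A : 'M[R]_n) (B : 'M[R]_(n, m)) (C : 'M[R]_(p, n)).

Definition Tinv : 'M[R]_(n + n + n) :=
  block_mx (block_mx 1%:M 1%:M 1%:M 1%:M) (col_mx 0 1%:M) (row_mx 1%:M 0) 0.

Definition Tm : 'M[R]_(n + n + n) :=
  block_mx (block_mx 0 0 1%:M 0) (col_mx 1%:M (- 1%:M)) (row_mx (- 1%:M) 1%:M) 0.

Definition Um (Kb Kl : 'M[R]_(m, n)) (Lb Ll : 'M[R]_(n, p)) : 'M[R]_(n + n + n) :=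
  block_mx (block_mx (A + B *m (Kb + Kl)) (Ll *m C + B *m Kb) 0 (A - Ll *m C))
    (col_mx (B *m Kb) 0) 0 (A - Lb *m C).

Lemma Tinv_mul k (a b c : 'M[R]_(n, k)) :
  Tinv *m col_mx (col_mx a b) c = col_mx (col_mx (a + b) (a + b + c)) a.
Proof.
rewrite /Tinv !mul_block_col mul_col_mx mul_row_col add_col_mx.
by rewrite !mul1mx !mul0mx !addr0.
Qed.

Lemma T_mul k (x y z : 'M[R]_(n, k)) :
  Tm *m col_mx (col_mx x y) z = col_mx (col_mx z (x - z)) (y - x).
Proof.
rewrite /Tm !mul_block_col mul_col_mx mul_row_col add_col_mx.
rewrite !mul1mx !mul0mx !mulNmx !mul1mx.
congr col_mx; first congr col_mx.
- by rewrite !add0r.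
- by rewrite addr0.
- by rewrite addr0 addrC.
Qed.

Lemma CL_mul Kb Kl Lb Ll k (x xb xl : 'M[R]_(n, k)) :
  closed_loop A B C Kb Kl Lb Ll *m col_mx (col_mx x xb) xl =
  col_mx (col_mx (A *m x + B *m Kb *m xb + B *m Kl *m xl)
                 (Lb *m C *m x + (A - Lb *m C + B *m Kb) *m xb + B *m Kl *m xl))
         (Ll *m C *m x + B *m Kb *m xb + (A - Ll *m C + B *m Kl) *m xl).
Proof.
rewrite /closed_loop !mul_block_col mul_col_mx mul_row_col add_col_mx.
by [].
Qed.

Lemma U_mul Kb Kl Lb Ll k (a b c : 'M[R]_(n, k)) :
  Um Kb Kl Lb Ll *m col_mx (col_mx a b) c =
  col_mx (col_mx ((A + B *m (Kb + Kl)) *m a + (Ll *m C + B *m Kb) *m b + B *m Kb *m c)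
                 ((A - Ll *m C) *m b))
         ((A - Lb *m C) *m c).
Proof.
rewrite /Um !mul_block_col mul_col_mx add_col_mx !mul0mx !addr0 !add0r.
by [].
Qed.

Lemma sim_vec Kb Kl Lb Ll k (a b c : 'M[R]_(n, k)) :
  closed_loop A B C Kb Kl Lb Ll *m (Tinv *m col_mx (col_mx a b) c) =
  Tinv *m (Um Kb Kl Lb Ll *m col_mx (col_mx a b) c).
Proof.
rewrite Tinv_mul U_mul Tinv_mul CL_mul.
rewrite !(mulmxDl, mulmxBl, mulmxDr, mulmxBr, mulmxA, mulNmx).
congr col_mx; first congr col_mx; apply/matrixP => i j; rewrite !mxE; ring.
Qed.


Lemma mx_ext (P Q : 'M[R]_(n + n + n)) :
  (forall a b c : 'M[R]_(n, n + n + n),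
     P *m col_mx (col_mx a b) c = Q *m col_mx (col_mx a b) c) -> P = Q.
Proof.
move=> H; rewrite -[P]mulmx1 -[Q]mulmx1 -(vsubmxK 1%:M) -(vsubmxK (usubmx 1%:M)).
exact: H.
Qed.

Lemma TinvT k (w : 'M[R]_(n + n + n, k)) : Tinv *m (Tm *m w) = w.
Proof.
rewrite -(vsubmxK w) -(vsubmxK (usubmx w)) T_mul Tinv_mul.
by congr col_mx; first congr col_mx; apply/matrixP => i j; rewrite !mxE; ring.
Qed.

Lemma det_Tinv : \det Tinv != 0.
Proof.
have : Tinv *m Tm = 1%:M by apply: mx_ext => a b c; rewrite -mulmxA TinvT mul1mx.
move=> /(congr1 determinant); rewrite det_mulmx det1.
by apply: contraPneq => ->; rewrite mul0r => /esym/eqP; rewrite oner_eq0.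
Qed.

Lemma simM Kb Kl Lb Ll :
  closed_loop A B C Kb Kl Lb Ll *m Tinv = Tinv *m Um Kb Kl Lb Ll.
Proof. by apply: mx_ext => a b c; rewrite -!mulmxA sim_vec. Qed.

Lemma char_ublock n1 n2 (P : 'M[R]_n1) (Q : 'M[R]_(n1, n2)) (D : 'M[R]_n2) :
  char_poly (block_mx P Q 0 D) = char_poly P * char_poly D.
Proof.
rewrite /char_poly /char_poly_mx map_block_mx map_mx0 (scalar_mx_block n1 n2).
by rewrite opp_block_mx add_block_mx oppr0 addr0 det_ublock.
Qed.

Lemma char_sim N (M U P : 'M[R]_N) :
  M *m P = P *m U -> \det P != 0 -> char_poly M = char_poly U.
Proof.
move=> E dP.
have H : char_poly_mx M *m map_mx polyC P = map_mx polyC P *m char_poly_mx U.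
  by rewrite /char_poly_mx mulmxBl mulmxBr -!map_mxM E scalar_mxC.
move: (congr1 determinant H); rewrite !det_mulmx det_map_mx [RHS]mulrC.
by move/mulIf; apply; rewrite polyC_eq0.
Qed.

Lemma char_U Kb Kl Lb Ll : char_poly (Um Kb Kl Lb Ll) =
  char_poly (A + B *m (Kb + Kl)) * char_poly (A - Ll *m C) * char_poly (A - Lb *m C).
Proof. by rewrite /Um !char_ublock. Qed.

Lemma inX_Tinv (a b c : 'cV[R]_n) :
  inX (Tinv *m col_mx (col_mx a b) c) <-> [/\ mx_le 0 a, mx_le 0 b & mx_le 0 c].
Proof.
rewrite Tinv_mul /inX !col_mxKu !col_mxKd /mx_le; split.
- case=> H1 H2 H3 H4 H5; split=> i j;
    [have := H3 i j | have := H4 i j | have := H5 i j]; rewrite !mxE; lra.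
- case=> H1 H2 H3; split=> i j; have := H1 i j; have := H2 i j; have := H3 i j;
    rewrite !mxE; lra.
Qed.

Lemma mx_le_mul k l q (P : 'M[R]_(k, l)) (v : 'M[R]_(l, q)) :
  mx_le 0 P -> mx_le 0 v -> mx_le 0 (P *m v).
Proof.
move=> HP Hv i j; rewrite !mxE; apply: sumr_ge0 => r _; apply: mulr_ge0.
- by have := HP i r; rewrite mxE.
- by have := Hv r j; rewrite mxE.
Qed.

Lemma mx_le_add k l (P Q : 'M[R]_(k, l)) :
  mx_le 0 P -> mx_le 0 Q -> mx_le 0 (P + Q).
Proof.
move=> HP HQ i j; have := HP i j; have := HQ i j; rewrite !mxE; lra.
Qed.

End S.

Theorem corollary1 (R : realType) (n m p : nat)
  (A : 'M[R]_n) (B : 'M[R]_(n, m)) (C : 'M[R]_(p, n)) :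
  mx_le 0 A ->
  (exists (Kb Kl : 'M[R]_(m, n)) (Lb Ll : 'M[R]_(n, p)),
      [/\ mx_le 0 (Ll *m C), is_schur (closed_loop A B C Kb Kl Lb Ll)
        & X_invariant (closed_loop A B C Kb Kl Lb Ll)]) ->
  exists (Kl' : 'M[R]_(m, n)) (Lb' Ll' : 'M[R]_(n, p)),
    [/\ mx_le 0 (Ll' *m C), is_schur (closed_loop A B C 0 Kl' Lb' Ll')
      & X_invariant (closed_loop A B C 0 Kl' Lb' Ll')].
Proof.
move=> _ [Kb [Kl [Lb [Ll [HLC Hs Hinv]]]]].
exists (Kb + Kl), Lb, Ll; split => //.
- have E : char_poly (closed_loop A B C 0 (Kb + Kl) Lb Ll) =
           char_poly (closed_loop A B C Kb Kl Lb Ll).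
    rewrite (char_sim (simM A B C 0 (Kb + Kl) Lb Ll) (det_Tinv R n)).
    rewrite (char_sim (simM A B C Kb Kl Lb Ll) (det_Tinv R n)).
    by rewrite !char_U add0r.
  by move=> z; rewrite E; exact: Hs.
- have step : forall z, inX z -> inX (closed_loop A B C Kb Kl Lb Ll *m z).
    by move=> z hz; exact: (Hinv z hz 1%N).
  have key : forall a b c : 'cV[R]_n, mx_le 0 a -> mx_le 0 b -> mx_le 0 c ->
      [/\ mx_le 0 ((A + B *m (Kb + Kl)) *m a + (Ll *m C + B *m Kb) *m b + B *m Kb *m c),
          mx_le 0 ((A - Ll *m C) *m b) & mx_le 0 ((A - Lb *m C) *m c)].
    move=> a b c ha hb hc.
    have := step _ (proj2 (inX_Tinv a b c) (And3 ha hb hc)).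
    by rewrite sim_vec U_mul => /inX_Tinv.
  have z0 : mx_le 0 (0 : 'cV[R]_n) by move=> i j.
  have step' : forall a b c : 'cV[R]_n,
      inX (Tinv R n *m col_mx (col_mx a b) c) ->
      inX (closed_loop A B C 0 (Kb + Kl) Lb Ll *m (Tinv R n *m col_mx (col_mx a b) c)).
    move=> a b c /inX_Tinv [ha hb hc].
    rewrite sim_vec U_mul; apply/inX_Tinv; split.
    + rewrite add0r mulmx0 addr0 mul0mx addr0.
      apply: mx_le_add; last exact: mx_le_mul.
      by case: (key a 0 0 ha z0 z0); rewrite !mulmx0 !addr0.
    + by case: (key 0 b 0 z0 hb z0).
    + by case: (key 0 0 c z0 z0 hc).
  move=> z hz t; elim: t => [|t IH] //=.
  move: IH; set w := iter t _ z.
  rewrite -(TinvT w); set v := Tm R n *m w.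
  rewrite -(vsubmxK v) -(vsubmxK (usubmx v)).
  exact: step'.
Qed.
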